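(* Let $s\ge 3$ and let $\lambda$ be an $(s,s+1,s+2)$-core partition of maximum size. Then there exist integers $1\le i\le s-1$ and $0\le j\le\lfloor (s-i+1)/2\rfloor$ such that $\lambda=\lambda_{i,j}$.
   Context: An $(s,s+1,s+2)$-core is a partition with no hook length divisible by $s$, $s+1$ or $s+2$. The $\beta$-set of a partition is the set of hook lengths in its first column; a partition is uniquely determined by its $\beta$-set, and for a finite set $\{h_1>h_2>\cdots>h_m\}$ of positive integers the unique partition with this $\beta$-set is $(h_1-(m-1),h_2-(m-2),\ldots,h_{m-1}-1,h_m)$. For $s\ge 3$, $1\le i\le s-1$, define $\beta_{i,0}=\bigcup_{k\ge 0}\{i+1+k(s+2),\ldots,(k+1)s-1\}$ (empty intervals omitted), and for $1\le j\le\lfloor(s-i+1)/2\rfloor$ define $\beta_{i,j}=\beta_{i,0}\cup\{i+p(s+2): 0\le p\le j-1\}$. Let $\lambda_{i,j}$ be the unique partition with $\beta(\lambda_{i,j})=\beta_{i,j}$ (each $\lambda_{i,j}$ is an $(s,s+1,s+2)$-core). *)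

(* Defs.v *)
From mathcomp Require Import all_boot.
Set Implicit Arguments. Unset Strict Implicit. Unset Printing Implicit Defensive.

Definition is_partition (la : seq nat) : bool :=
  sorted geq la && all (fun x => 0 < x) la.

Definition psize (la : seq nat) : nat := sumn la.

(* length of column c (0-indexed): number of rows longer than c *)
Definition conj_part (la : seq nat) (c : nat) : nat := count (fun x => c < x) la.

(* hook length of the cell in row r, column c (0-indexed), for a cell of la
   (r < size la, c < la_r): arm + leg + 1 = (la_r - c) + (la'_c - r) - 1 *)
Definition hook (la : seq nat) (r c : nat) : nat :=
  (nth 0 la r - c) + (conj_part la c - r) - 1.

Definition is_core (t : nat) (la : seq nat) : bool :=
  all (fun r => all (fun c => ~~ (t %| hook la r c)) (iota 0 (nth 0 la r)))
      (iota 0 (size la)).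

Definition is_sss_core (s : nat) (la : seq nat) : bool :=
  [&& is_core s la, is_core s.+1 la & is_core s.+2 la].

(* membership in beta_{i,j}:
   beta_{i,0} = U_{k>=0} {i+1+k(s+2), ..., (k+1)s-1}
   beta_{i,j} = beta_{i,0} U {i + p(s+2) : 0 <= p <= j-1}.
   (An h in the k-th interval forces k <= h, so bounding k by h is exact.) *)
Definition in_beta (s i j h : nat) : bool :=
  has (fun k => (i + 1 + k * (s + 2) <= h) && (h <= (k + 1) * s - 1) && (0 < h))
      (iota 0 h.+1)
  || has (fun p => h == i + p * (s + 2)) (iota 0 j).

(* beta_{i,j} as a strictly decreasing list h_1 > h_2 > ... > h_m.  All its
   elements are positive and below (s+2)^2 when 1 <= i <= s-1 and
   j <= (s-i+1)/2, so this enumerates the whole set. *)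
Definition beta_list (s i j : nat) : seq nat :=
  rev [seq h <- iota 1 ((s + 2) ^ 2) | in_beta s i j h].

(* the unique partition with beta-set {h_1 > ... > h_m}:
   (h_1-(m-1), h_2-(m-2), ..., h_{m-1}-1, h_m) *)
Definition partition_of_beta (l : seq nat) : seq nat :=
  [seq nth 0 l k - (size l - 1 - k) | k <- iota 0 (size l)].

Definition lambda_ij (s i j : nat) : seq nat := partition_of_beta (beta_list s i j).

(* Main.v *)
Require Import Defs.
From mathcomp Require Import all_boot zify.
Set Implicit Arguments. Unset Strict Implicit. Unset Printing Implicit Defensive.

Definition beta (la : seq nat) : seq nat :=
  [seq nth 0 la r + (size la - 1 - r) | r <- iota 0 (size la)].

Definition dec : rel nat := fun x y => y < x.

Lemma size_beta la : size (beta la) = size la.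
Proof. by rewrite size_map size_iota. Qed.

Lemma nth_beta la p : p < size la -> nth 0 (beta la) p = nth 0 la p + (size la - 1 - p).
Proof. by move=> hp; rewrite (nth_map 0) ?size_iota // nth_iota. Qed.

Lemma part_nth la : is_partition la ->
  (forall p q, p <= q -> q < size la -> nth 0 la q <= nth 0 la p) /\
  (forall p, p < size la -> 0 < nth 0 la p).
Proof.
move=> /andP [Hs Ha]; split.
  move=> p q pq qn.
  have tr : transitive geq by move=> a b c /= h1 h2; apply: leq_trans h2 h1.
  have H := @sorted_leq_nth nat geq tr (fun a => leqnn a) 0 la Hs.
  apply: (H p q) => //; rewrite inE //; exact: leq_ltn_trans qn.
by move=> p hp; move/all_nthP: Ha; apply.
Qed.

Lemma mem_beta la v : (v \in beta la) = has (fun p => v == nth 0 (beta la) p) (iota 0 (size la)).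
Proof.
apply/idP/hasP.
  move=> /(nthP 0) [p hp <-]; exists p; rewrite ?mem_iota //; by rewrite size_beta in hp.
move=> [p]; rewrite mem_iota /= => hp /eqP ->; apply: mem_nth; by rewrite size_beta.
Qed.

Lemma pob_beta la : partition_of_beta (beta la) = la.
Proof.
apply: (@eq_from_nth _ 0); rewrite /partition_of_beta size_map size_iota size_beta //.
move=> p hp; rewrite (nth_map 0) ?size_iota ?size_beta // nth_iota // nth_beta //.
by rewrite add0n addnK.
Qed.

Lemma sumn_iota_nth (l : seq nat) : sumn l = \sum_(0 <= r < size l) nth 0 l r.
Proof.
by rewrite sumnE -{1}(mkseq_nth 0 l) /mkseq big_map /index_iota subn0.
Qed.

Lemma psize_beta la : psize la + 'C(size la, 2) = sumn (beta la).
Proof.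
rewrite /psize (sumn_iota_nth la) (sumn_iota_nth (beta la)) size_beta -bin2_sum.
rewrite [X in _ + X = _]big_nat_rev /= -big_split /=.
apply: eq_big_nat => r /andP [_ hr].
rewrite nth_beta //. lia.
Qed.

Lemma conj_char la c : is_partition la ->
  exists q, [/\ q <= size la, conj_part la c = q &
    forall p, p < size la -> (c < nth 0 la p) = (p < q)].
Proof.
move=> /part_nth [Hd Hp].
set q := find (fun y => y <= c) la.
have hq : q <= size la by apply: find_size.
have Hch : forall p, p < size la -> (c < nth 0 la p) = (p < q).
  move=> p hp; case: (ltnP p q) => hpq.
    by have := before_find 0 hpq; rewrite ltnNge => ->.
  have hhas : has (fun y => y <= c) la by rewrite has_find; apply: leq_ltn_trans hp.
  have := nth_find 0 hhas; rewrite -/q /= => h.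
  apply/negbTE; rewrite -leqNgt; apply: leq_trans h; exact: Hd.
exists q; split => //.
rewrite /conj_part -(cat_take_drop q la) count_cat.
have -> : count (fun x => c < x) (take q la) = q.
  apply/eqP; rewrite -[X in _ == X](size_takel hq) -all_count; apply/(all_nthP 0) => p.
  rewrite size_takel // => hp; rewrite nth_take // Hch //; by apply: leq_trans hq.
have -> : count (fun x => c < x) (drop q la) = 0.
  apply/eqP; rewrite -leqn0 leqNgt -has_count; apply/(has_nthP 0) => -[p]; rewrite size_drop => hp.
  rewrite nth_drop Hch; first by rewrite ltnNge leq_addr.
  lia.
by rewrite addn0.
Qed.

Definition closed (t : nat) (B : pred nat) :=
  forall h, B h -> t <= h -> t < h /\ B (h - t).

Lemma is_coreP t la :
  reflect (forall r c, r < size la -> c < nth 0 la r -> ~~ (t %| hook la r c)) (is_core t la).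
Proof.
apply: (iffP allP) => [H r c hr hc | H r].
  have := H r; rewrite mem_iota add0n => /(_ hr) /allP /(_ c); rewrite mem_iota; exact.
rewrite mem_iota add0n => hr; apply/allP => c; rewrite mem_iota add0n; exact: H.
Qed.

Lemma core_closed t la : is_partition la -> is_core t la -> closed t (mem (beta la)).
Proof.
move=> Hpart /is_coreP Hc h.
rewrite /= mem_beta => /hasP [q]; rewrite mem_iota add0n /= => hq /eqP hh th.
have [Hd Hp] := part_nth Hpart.
set n := size la in hq Hd Hp.
set x := h - t.
have hbeta : forall p, p < n -> nth 0 (beta la) p = nth 0 la p + (n - 1 - p) by move=> p; apply: nth_beta.
case: (boolP ((t < h) && (x \in beta la))) => [/andP [] //| Hno].
exfalso.
have xnb : x \notin beta la.
  case: (ltnP t h) Hno => //= th2 _.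
  have -> : x = 0 by rewrite /x; lia.
  rewrite mem_beta; apply/hasP => -[p]; rewrite mem_iota /= => hp /eqP.
  rewrite hbeta //; have := Hp p hp; lia.
set q' := find (fun b => b < x) (beta la).
have hq' : q' <= n by rewrite /n -(size_beta la); apply: find_size.
have Hlo : forall p, p < q' -> x < nth 0 (beta la) p.
  move=> p hp; have := before_find 0 hp; rewrite /= ltnNge => /negbFE.
  rewrite leq_eqVlt => /orP [/eqP E|//]; exfalso; move/negP: xnb; apply.
  rewrite E; apply: mem_nth; rewrite size_beta; by apply: leq_trans hq'.
have Hhi : q' < n -> nth 0 (beta la) q' < x.
  move=> hn; have hhas : has (fun b => b < x) (beta la) by rewrite has_find size_beta.
  exact: (nth_find 0 hhas).
have qq : q < q'.
  rewrite ltnNge; apply/negP => hle.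
  have hn : q' < n by apply: leq_ltn_trans hq.
  have := Hhi hn; rewrite hbeta // => h1.
  have := Hd _ _ hle hq; have := hbeta q hq; rewrite /x in h1; lia.
set c := x + q' - n.
have Hcq : forall p, p < n -> (c < nth 0 la p) = (p < q').
  move=> p hp; case: (ltnP p q') => hpq.
    have h1 := Hlo (q'.-1) (ltac:(lia)).
    have hq1 : q'.-1 < n by lia.
    rewrite hbeta // in h1; have := Hd p q'.-1 (ltac:(lia)) hq1 => h2.
    have := Hp _ hq1; rewrite /c; lia.
  have hn : q' < n by apply: leq_ltn_trans hp.
  have h1 := Hhi hn; rewrite hbeta // in h1; have := Hd _ _ hpq hp => h2.
  have := Hp _ hn; rewrite /c; lia.
have [q'' [hq'' Hconj Hch]] := conj_char c Hpart.
have eqq : q'' = q'.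
  case: (ltngtP q'' q') => // hlt.
    have hn : q'' < n by lia.
    by have := Hch _ hn; rewrite Hcq // hlt ltnn.
  have hn : q' < n by lia.
  by have := Hch _ hn; rewrite Hcq // hlt ltnn.
have hcq : c < nth 0 la q by rewrite Hcq.
have := Hc q c hq hcq; rewrite /hook Hconj eqq.
have := hbeta q hq; rewrite -hh => hb.
have nx : n <= x + q'.
  case: (ltnP q' n) => hn; last by lia.
  have := Hhi hn; rewrite hbeta //; have := Hp _ hn; lia.
have -> : nth 0 la q - c + (q' - q) - 1 = t.
  move: hcq nx; rewrite /c /x. have := Hp q hq. lia.
by rewrite dvdnn.
Qed.

Lemma closed_iter t B : closed t B -> forall k h, B h -> k * t <= h -> B (h - k * t).
Proof.
move=> Hc; elim=> [|k IH] h hB hk; first by rewrite mul0n subn0.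
have h1 : B (h - k * t) by apply: IH => //; apply: leq_trans hk; rewrite leq_mul2r leqnSn orbT.
have h2 : t <= h - k * t by move: hk; rewrite mulSn; lia.
have [_ h3] := Hc _ h1 h2.
have -> : h - k.+1 * t = h - k * t - t by rewrite mulSn; lia.
exact: h3.
Qed.

Lemma closed_core t la : 0 < t -> is_partition la -> closed t (mem (beta la)) -> is_core t la.
Proof.
move=> t0 Hpart Hcl; apply/is_coreP => r c hr hc; apply/negP => /dvdnP [k hk].
have [Hd Hp] := part_nth Hpart.
have [q [hq Hconj Hch]] := conj_char c Hpart.
set n := size la in hr hq Hd Hp Hch.
have rq : r < q by rewrite -Hch.
set x := c + n - q.
have xnb : x \notin beta la.
  rewrite mem_beta; apply/hasP => -[p]; rewrite mem_iota /= => hp /eqP.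
  rewrite nth_beta //; have := Hch p hp; case: (ltnP p q) => hpq hcp.
    have := hcp; rewrite /x; lia.
  have := hcp; rewrite /x; lia.
have hr' : nth 0 (beta la) r \in beta la by apply: mem_nth; rewrite size_beta.
have hbr := nth_beta hr.
have hook_eq : hook la r c = nth 0 (beta la) r - x.
  rewrite /hook Hconj hbr /x; lia.
have hpos : 0 < hook la r c by rewrite /hook Hconj; lia.
have hle : k * t <= nth 0 (beta la) r by lia.
have hx : nth 0 (beta la) r - k * t = x by lia.
have := @closed_iter t _ Hcl k _ hr' hle; rewrite hx => hx'.
by move/negP: xnb.
Qed.

Lemma strict_gap (l : seq nat) : sorted dec l ->
  forall p q, p <= q -> q < size l -> nth 0 l q + (q - p) <= nth 0 l p.
Proof.
move=> /(sortedP 0) Hs p; elim=> [|q IH] hpq hq.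
  have -> : p = 0 by lia.
  by rewrite subnn addn0.
case: (ltnP p q.+1) => hpq'.
  have h1 := IH (ltnSE hpq') (ltnW hq).
  have h2 := Hs q hq. rewrite /dec in h2. lia.
have -> : p = q.+1 by lia.
by rewrite subnn addn0.
Qed.

Lemma pob_part (l : seq nat) : sorted dec l -> all (fun x => 0 < x) l ->
  is_partition (partition_of_beta l) /\ beta (partition_of_beta l) = l.
Proof.
move=> Hs Hpos.
have Hg := strict_gap Hs.
have Hp : forall p, p < size l -> 0 < nth 0 l p by move=> p; move/all_nthP: Hpos; apply.
set n := size l in Hg Hp.
have Hge : forall p, p < n -> n - p <= nth 0 l p.
  move=> p hp; have h1 := Hg p n.-1 (ltac:(lia)) (ltac:(lia)); have := Hp n.-1 (ltac:(lia)); lia.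
have sz : size (partition_of_beta l) = n by rewrite /partition_of_beta size_map size_iota.
have nthm : forall p, p < n -> nth 0 (partition_of_beta l) p = nth 0 l p - (n - 1 - p).
  by move=> p hp; rewrite /partition_of_beta (nth_map 0) ?size_iota // nth_iota.
split.
  apply/andP; split.
    apply/(sortedP 0) => p; rewrite sz => hp; rewrite !nthm //; last by lia.
    have := Hg p p.+1 (leqnSn p) hp; rewrite /geq /=. lia.
  apply/(all_nthP 0) => p; rewrite sz => hp; rewrite nthm //; have := Hge p hp; lia.
apply: (@eq_from_nth _ 0); rewrite size_beta sz // => p hp.
rewrite nth_beta sz // nthm //; have := Hge p hp; lia.
Qed.

Section Comb.
Variable s : nat.
Hypothesis s3 : 3 <= s.
Local Notation W := s.+2.

Definition wd k := s - (2*k).+1.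
Definition ideal (B : pred nat) :=
  (forall h, B h -> 0 < h) /\ closed s B /\ closed s.+1 B /\ closed s.+2 B.
Definition Sum (B : pred nat) := \sum_(0 <= v < W * W) B v * v.
Definition Cnt (B : pred nat) := \sum_(0 <= v < W * W) (B v : nat).
Definition lst (B : pred nat) := rev (filter B (iota 0 (W * W))).
Definition nl (B : pred nat) k := \sum_(0 <= r < W) (B (k * W + r) : nat).
Definition sg (B : pred nat) k := \sum_(0 <= r < W) B (k * W + r) * r.

Lemma lvl_inj k r k' r' : r < W -> r' < W -> k * W + r = k' * W + r' -> k = k' /\ r = r'.
Proof.
move=> hr hr' E.
have E1 := congr1 (divn^~ W) E; rewrite /= !divnMDl // !divn_small // !addn0 in E1.
have E2 := congr1 (modn^~ W) E; rewrite /= !modnMDl !modn_small // in E2.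
Qed.

Lemma decomp h : h = (h %/ W) * W + h %% W /\ h %% W < W.
Proof. by split; [apply: divn_eq | apply: ltn_pmod]. Qed.

Lemma gap B : ideal B -> forall h, B h -> exists k r, [/\ h = k * W + r, 0 < r & r + (2 * k).+1 <= s].
Proof.
move=> [Hpos [Cs [Cs1 Cs2]]]; elim/ltn_ind => h IH hB.
case: (ltnP h s) => hs.
  exists 0, h; rewrite mul0n add0n; split => //; [exact: Hpos | lia].
have [hs' hBs] := Cs h hB hs.
case: (ltnP h W) => hW.
  have h1 : s.+1 <= h by lia.
  have [h2 _] := Cs1 h hB h1; lia.
have [_ hBW] := Cs2 h hB hW.
have l1 : h - W < h by lia.
have l2 : h - s < h by lia.
have [k [r [E r0 rk]]] := IH (h - W) l1 hBW.
have [k' [r' [E' r0' rk']]] := IH (h - s) l2 hBs.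
have E2 : k * W + (r + 2) = k' * W + r' by lia.
have hr1 : r + 2 < W by lia.
have hr2 : r' < W by lia.
have [Ek Er] := lvl_inj hr1 hr2 E2; subst k' r'.
exists k.+1, r; rewrite mulSn; split; lia.
Qed.

Lemma bounded B : ideal B -> forall h, B h -> h < W * W.
Proof.
move=> HB h hB; have [k [r [-> r0 rk]]] := gap HB hB.
have h1 : k.+1 * W <= W * W by rewrite leq_mul2r; apply/orP; right; lia.
move: h1; rewrite mulSn; lia.
Qed.

Lemma lst_sorted B : sorted dec (lst B).
Proof.
rewrite /lst rev_sorted.
have -> : (fun z : nat => dec^~ z) = ltn by [].
apply: sorted_filter; first exact: ltn_trans.
exact: iota_ltn_sorted.
Qed.

Lemma mem_lst B v : (v \in lst B) = (v < W * W) && B v.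
Proof. by rewrite mem_rev mem_filter mem_iota add0n andbC. Qed.

Lemma sumn_lst B : sumn (lst B) = Sum B.
Proof.
rewrite /lst /Sum sumn_rev sumnE big_filter big_mkcond /index_iota subn0.
by apply: eq_bigr => v _; case: (B v); rewrite ?mul1n ?mul0n.
Qed.

Lemma size_lst B : size (lst B) = Cnt B.
Proof.
rewrite /lst /Cnt size_rev size_filter -sum1_count big_mkcond /index_iota subn0.
by apply: eq_bigr => v _; case: (B v).
Qed.

Lemma sum_split (F : nat -> nat) K :
  \sum_(0 <= v < K * W) F v = \sum_(0 <= k < K) \sum_(0 <= r < W) F (k * W + r).
Proof.
elim: K => [|K IH]; first by rewrite mul0n !big_geq.
rewrite [RHS]big_nat_recr //= -IH (@big_cat_nat _ _ _ (K * W)) //=; last by rewrite leq_mul2r leqnSn orbT.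
congr (_ + _).
rewrite -{1}(add0n (K * W)) big_addn.
have -> : K.+1 * W - K * W = W by rewrite mulSn addnK.
by apply: eq_bigr => r _; rewrite addnC.
Qed.

Lemma Cnt_lvl B : Cnt B = \sum_(0 <= k < W) nl B k.
Proof. by rewrite /Cnt sum_split. Qed.

Lemma Sum_lvl B : Sum B = \sum_(0 <= k < W) (k * W * nl B k + sg B k).
Proof.
rewrite /Sum sum_split; apply: eq_bigr => k _.
rewrite /nl /sg big_distrr -big_split /=; apply: eq_bigr => r _.
by case: (B _); rewrite ?mul1n ?mul0n ?muln1 ?muln0.
Qed.

End Comb.

Lemma sum_eq1 y M (f : nat -> nat) : y < M -> \sum_(0 <= v < M) (v == y) * f v = f y.
Proof.
move=> hy; rewrite (bigD1_seq y) /=; last 2 first.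
- by rewrite /index_iota mem_iota; lia.
- exact: iota_uniq.
rewrite eqxx mul1n big1 ?addn0 //.
by move=> v /negbTE ->.
Qed.

Lemma sum_add1 (a : pred nat) y M (f : nat -> nat) : y < M -> ~~ a y ->
  \sum_(0 <= v < M) (a v || (v == y)) * f v = \sum_(0 <= v < M) a v * f v + f y.
Proof.
move=> hy ha; rewrite -(sum_eq1 f hy) -big_split /=; apply: eq_bigr => v _.
case: eqVneq => [->|_]; first by rewrite (negbTE ha).
by rewrite orbF mul0n addn0.
Qed.

Lemma cnt_add1 (a : pred nat) y M : y < M -> ~~ a y ->
  \sum_(0 <= v < M) ((a v || (v == y)) : nat) = \sum_(0 <= v < M) (a v : nat) + 1.
Proof.
move=> hy ha; have h := sum_add1 (fun _ => 1) hy ha; rewrite /= in h.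
have e1 : \sum_(0 <= v < M) ((a v || (v == y)) : nat) = \sum_(0 <= v < M) (a v || (v == y)) * 1.
  by apply: eq_bigr => v _; rewrite muln1.
have e2 : \sum_(0 <= v < M) (a v : nat) = \sum_(0 <= v < M) a v * 1.
  by apply: eq_bigr => v _; rewrite muln1.
by rewrite e1 e2 h.
Qed.

Lemma sum_pos_ex (P : pred nat) M : 0 < \sum_(0 <= r < M) (P r : nat) -> exists r, r < M /\ P r.
Proof.
case: (boolP (has P (iota 0 M))) => [Hh|hn].
  move/hasP: Hh => [r]; rewrite mem_iota add0n => /andP [_ h] hP; by exists r.
rewrite big1_seq ?ltnn // => r /andP [_ hr]; apply/eqP; rewrite eqb0.
rewrite mem_index_iota in hr.
by apply/negP => hP; move/hasP: hn; apply; exists r; rewrite ?mem_iota.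
Qed.

Section Comb2.
Variable s : nat.
Hypothesis s3 : 3 <= s.
Local Notation W := s.+2.
Local Notation wd := (wd s).
Local Notation nl := (nl s).
Local Notation sg := (sg s).
Local Notation Sum := (Sum s).
Local Notation Cnt := (Cnt s).

Lemma lvl_bound (P : pred nat) w : w < W -> (forall r, r < W -> P r -> 0 < r <= w) ->
  forall n, \sum_(0 <= r < W) (P r : nat) = n ->
  [/\ n <= w, \sum_(0 <= r < W) P r * r + 'C(n, 2) <= n * w &
   (\sum_(0 <= r < W) P r * r + 'C(n, 2) = n * w -> forall r, r < W -> P r = (r <= w) && (w < r + n))].
Proof.
elim: w P => [|w IH] P hw HP n Hn.
  have P0 : forall r, r < W -> P r = false.
    by move=> r hr; apply/negP => hP; have := HP r hr hP; lia.
  have Hz : forall f : nat -> nat, \sum_(0 <= r < W) P r * f r = 0.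
    move=> f; rewrite big1_seq // => r /andP [_]; rewrite mem_iota => /andP [_ hr].
    by rewrite P0.
  have n0 : n = 0.
    have h := Hz (fun _ => 1); rewrite -Hn -[RHS]h.
    by apply: eq_bigr => r _; rewrite muln1.
  rewrite n0 Hz; split => // _ r hr; rewrite P0 //; lia.
case: (boolP (P w.+1)) => Pw.
  set P' := fun r => P r && (r != w.+1).
  have HP' : forall r, r < W -> P' r -> 0 < r <= w.
    move=> r hr /andP [hP hne]; have := HP r hr hP; lia.
  have eP : forall r, P r = P' r || (r == w.+1).
    by move=> r; rewrite /P'; case: eqVneq => [->|]; rewrite ?Pw ?andbT ?orbF.
  have hwW : w.+1 < W by [].
  have hna : ~~ P' w.+1 by rewrite /P' eqxx andbF.
  set n' := \sum_(0 <= r < W) (P' r : nat).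
  have nP' : n = n' + 1.
    have h := sum_add1 (fun _ => 1) hwW hna; rewrite /= in h.
    rewrite -Hn /n'.
    have e2 : \sum_(0 <= r < W) (P' r : nat) = \sum_(0 <= r < W) P' r * 1.
      by apply: eq_bigr => r _; rewrite muln1.
    rewrite e2 -h; apply: eq_bigr => r _; by rewrite muln1 -eP.
  have sP : \sum_(0 <= r < W) P r * r = \sum_(0 <= r < W) P' r * r + w.+1.
    have h := sum_add1 id hwW hna; rewrite /= in h; rewrite -h.
    by apply: eq_bigr => r _; rewrite -eP.
  have [h1 h2 h3] := IH P' (ltnW hw) HP' _ (erefl n').
  have bn : 'C(n, 2) = 'C(n', 2) + n' by rewrite nP' addn1 binS bin1.
  split.
  - lia.
  - rewrite sP bn nP'. move: h1 h2. nia.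
  - rewrite sP bn => E r hr.
    have E' : \sum_(0 <= r < W) P' r * r + 'C(n', 2) = n' * w.
      move: h2 E; rewrite nP'; nia.
    have := h3 E' r hr; rewrite eP /P'; case: eqVneq => [->|ne]; rewrite ?andbT ?andbF ?orbF ?orbT.
      move=> _; lia.
    move=> ->; lia.
have HP2 : forall r, r < W -> P r -> 0 < r <= w.
  move=> r hr hP; have := HP r hr hP; case: (eqVneq r w.+1) => [E|ne]; first by move: hP; rewrite E (negbTE Pw).
  lia.
have [h1 h2 h3] := IH P (ltnW hw) HP2 _ Hn.
split.
- lia.
- move: h2; nia.
- move=> E.
  have n0 : n = 0 by move: h2 E; nia.
  have E' : \sum_(0 <= r < W) P r * r + 'C(n, 2) = n * w by move: h2 E; nia.
  move=> r hr; rewrite (h3 E' r hr); rewrite n0; lia.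
Qed.

Lemma top_sum n w : n <= w -> w < W ->
  \sum_(0 <= r < W) (((r <= w) && (w < r + n)) : nat) = n /\
  \sum_(0 <= r < W) ((r <= w) && (w < r + n)) * r + 'C(n, 2) = n * w.
Proof.
move=> hn hw; elim: n hn => [|n IH] hn.
  rewrite !big1 // => r _; rewrite addn0; case: leqP => //= h; rewrite ltnNge h //.
have [IH1 IH2] := IH (ltnW hn).
have ey : forall r, ((r <= w) && (w < r + n.+1)) = ((r <= w) && (w < r + n)) || (r == w - n).
  move=> r; lia.
have hy : w - n < W by lia.
have hna : ~~ ((w - n <= w) && (w < w - n + n)) by lia.
set a := fun r => (r <= w) && (w < r + n).
have hna' : ~~ a (w - n) by [].
split.
  have h := sum_add1 (fun _ => 1) hy hna'; rewrite /= in h.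
  have e2 : \sum_(0 <= r < W) ((r <= w) && (w < r + n) : nat) = \sum_(0 <= r < W) a r * 1.
    by apply: eq_bigr => r _; rewrite muln1.
  have e3 : \sum_(0 <= r < W) ((r <= w) && (w < r + n.+1) : nat) = \sum_(0 <= r < W) (a r || (r == w - n)) * 1.
    by apply: eq_bigr => r _; rewrite muln1 ey.
  by rewrite e3 h -e2 IH1 addn1.
have h := sum_add1 id hy hna'; rewrite /= in h.
have e3 : \sum_(0 <= r < W) ((r <= w) && (w < r + n.+1)) * r = \sum_(0 <= r < W) (a r || (r == w - n)) * r.
  by apply: eq_bigr => r _; rewrite ey.
rewrite e3 h binS bin1.
move: IH2; rewrite /a; nia.
Qed.

Lemma closedW t B h : closed t B -> B h -> t <= h -> B (h - t).
Proof. by move=> C hB ht; have [_ ->] := C h hB ht. Qed.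

Lemma lvl_facts B k : ideal s B ->
  forall r, r < W -> B (k * W + r) -> 0 < r /\ r + (2 * k).+1 <= s.
Proof.
move=> HB r hr hB; have [k' [r' [E r0 rk]]] := gap s3 HB hB.
have hr' : r' < W by lia.
have [Ek Er] := lvl_inj hr hr' E; subst k' r'; split => //.
Qed.

Lemma nl_bound B k : ideal s B ->
  [/\ nl B k <= wd k, sg B k + 'C(nl B k, 2) <= nl B k * wd k &
   (sg B k + 'C(nl B k, 2) = nl B k * wd k ->
     forall r, r < W -> B (k * W + r) = (r <= wd k) && (wd k < r + nl B k))].
Proof.
move=> HB.
have hw : wd k < W by rewrite /wd; lia.
have HP : forall r, r < W -> B (k * W + r) -> 0 < r <= wd k.
  move=> r hr hB; have := lvl_facts HB hr hB; rewrite /wd; lia.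
exact: (lvl_bound (P := fun r => B (k * W + r)) hw HP (erefl _)).
Qed.

Lemma drop2 B k : ideal s B -> 0 < nl B k.+1 -> nl B k.+1 + 2 <= nl B k.
Proof.
move=> HB hpos.
have [Hpos [Cs [Cs1 Cs2]]] := HB.
have exP : exists r, (r < W) && B (k.+1 * W + r).
  by have [r [hr hB]] := sum_pos_ex hpos; exists r; rewrite hr.
have ubP : forall r, (r < W) && B (k.+1 * W + r) -> r <= W by move=> r /andP [h _]; lia.
case: (ex_maxnP exP ubP) => M /andP [hM hBM] Hmax.
have [_ hMs] := lvl_facts HB hM hBM.
have hM1 : M.+1 < W by lia.
have hM2 : M.+2 < W by lia.
have nB1 : ~~ B (k.+1 * W + M.+1).
  by apply/negP => h; have := Hmax M.+1; rewrite hM1 h => /(_ isT); lia.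
have nB2 : ~~ (B (k.+1 * W + M.+2) || (M.+2 == M.+1)).
  apply/negP => /orP [h|/eqP]; last by lia.
  have := Hmax M.+2; rewrite hM2 h => /(_ isT); lia.
set Q := fun r => (B (k.+1 * W + r) || (r == M.+1)) || (r == M.+2).
have eQ : \sum_(0 <= r < W) (Q r : nat) = nl B k.+1 + 2.
  rewrite /Q (cnt_add1 (a := fun r => B (k.+1 * W + r) || (r == M.+1)) hM2 nB2).
  by rewrite (cnt_add1 (a := fun r => B (k.+1 * W + r)) hM1 nB1) /nl -addnA.
rewrite -eQ /nl; apply: leq_sum => r _.
rewrite /Q; case: (boolP (B (k.+1 * W + r))) => [hB|_] /=.
  have := closedW Cs2 hB; rewrite mulSn => /(_ (ltac:(lia))).
  have e : W + k * W + r - W = k * W + r by lia.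
  by rewrite e => ->.
case: eqVneq => [->|_] /=.
  have := closedW Cs1 hBM; rewrite mulSn => /(_ (ltac:(lia))).
  have e : W + k * W + M - s.+1 = k * W + M.+1 by lia.
  by rewrite e => ->.
case: eqVneq => [->|_] //=.
have := closedW Cs hBM; rewrite mulSn => /(_ (ltac:(lia))).
have e : W + k * W + M - s = k * W + M.+2 by lia.
by rewrite e => ->.
Qed.

End Comb2.

Lemma term_le_sum (F : nat -> nat) M k : k < M -> F k <= \sum_(0 <= i < M) F i.
Proof.
move=> hk; rewrite (bigD1_seq k) /=; first exact: leq_addr.
- by rewrite mem_index_iota.
- exact: iota_uniq.
Qed.

Section Comb3.
Variable s : nat.
Hypothesis s3 : 3 <= s.
Local Notation W := s.+2.
Local Notation wd := (wd s).
Local Notation nl := (nl s).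
Local Notation sg := (sg s).
Local Notation Sum := (Sum s).
Local Notation Cnt := (Cnt s).

Definition optimal (B : pred nat) :=
  ideal s B /\ forall B', ideal s B' -> Sum B' + 'C(Cnt B, 2) <= Sum B + 'C(Cnt B', 2).

Lemma lvl_eval (J : nat -> nat -> bool) k r : r < W ->
  (fun v => J (v %/ W) (v %% W)) (k * W + r) = J k r.
Proof. by move=> hr /=; rewrite divnMDl // modnMDl divn_small // modn_small // addn0. Qed.

Lemma justify B : optimal B ->
  forall k r, r < W -> B (k * W + r) = (r <= wd k) && (wd k < r + nl B k).
Proof.
move=> [HB Hopt].
set n := nl B.
set J := fun k r => (r <= wd k) && (wd k < r + n k).
set B' := fun v => J (v %/ W) (v %% W).
have hB' : forall k r, r < W -> B' (k * W + r) = J k r by move=> k r hr; apply: lvl_eval.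
have hn : forall k, n k <= wd k by move=> k; have [] := nl_bound s3 k HB.
have hnl' : forall k, nl B' k = n k /\ sg B' k + 'C(n k, 2) = n k * wd k.
  move=> k; have [t1 t2] := @top_sum s s3 (n k) (wd k) (hn k) (ltac:(rewrite /wd; lia)).
  split.
    rewrite /nl -[RHS]t1; apply: eq_big_nat => r /andP [_ hr]; by rewrite hB'.
  rewrite /sg -[RHS]t2; congr (_ + _); apply: eq_big_nat => r /andP [_ hr]; by rewrite hB'.
have Hid' : ideal s B'.
  have gen : forall t, t <= W -> W <= t + 2 -> closed t B'.
    move=> t ht1 ht2 h hBh th.
    have [Eh hr] := decomp s h.
    move: (h %/ W) (h %% W) Eh hr => q r Eh hr; subst h.
    move: hBh; rewrite hB' // /J => /andP [r1 r2].
    have hq0 : 0 < n q by have := hn q; lia.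
    case: q th r1 r2 hq0 => [|q] th r1 r2 hq0.
      exfalso; move: th r1; rewrite mul0n add0n /wd; lia.
    have d2 := drop2 s3 HB hq0.
    rewrite -/n in d2.
    have hwq : wd q = wd q.+1 + 2 by have := hn q.+1; rewrite /wd; lia.
    have e : q.+1 * W + r - t = q * W + (r + (W - t)) by rewrite mulSn; lia.
    split; first by have := hn q.+1; rewrite mulSn; lia.
    rewrite e hB'; last by have := hn q.+1; rewrite /wd in r1 *; lia.
    rewrite /J; apply/andP; split; lia.
  split.
    move=> h hBh; have [Eh hr] := decomp s h.
    move: (h %/ W) (h %% W) Eh hr => q r Eh hr; subst h.
    move: hBh; rewrite hB' // /J; have := hn q; lia.
  split; first by apply: gen; lia.
  split; apply: gen; lia.
have cnt : Cnt B' = Cnt B.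
  rewrite !Cnt_lvl; apply: eq_bigr => k _; by have [-> _] := hnl' k.
have hsg : forall k, sg B k <= sg B' k.
  move=> k; have [_ h2 _] := nl_bound s3 k HB; have [_ h3] := hnl' k; rewrite -/n in h2; lia.
have sumE : Sum B' = Sum B + \sum_(0 <= k < W) (sg B' k - sg B k).
  rewrite !Sum_lvl -big_split /=; apply: eq_bigr => k _.
  have [-> _] := hnl' k; have := hsg k; rewrite -/n; lia.
have := Hopt B' Hid'; rewrite cnt sumE => hle.
have d0 : forall k, k < W -> sg B' k - sg B k = 0.
  move=> k hk; have := term_le_sum (fun k => sg B' k - sg B k) hk; lia.
move=> k r hr.
case: (ltnP k W) => hk.
  have [_ h2 h3] := nl_bound s3 k HB.
  apply: h3; have := d0 k hk; have [_ h4] := hnl' k; have := hsg k; rewrite -/n in h2 h4 *; lia.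
have nB : B (k * W + r) = false.
  apply/negP => hb; have := bounded s3 HB hb.
  have : W * W <= k * W by rewrite leq_mul2r; apply/orP; right.
  lia.
rewrite nB; have := hn k; rewrite /wd; lia.
Qed.

End Comb3.

Section Comb4.
Variable s : nat.
Hypothesis s3 : 3 <= s.
Local Notation W := s.+2.
Local Notation wd := (wd s).
Local Notation nl := (nl s).
Local Notation sg := (sg s).
Local Notation Sum := (Sum s).
Local Notation Cnt := (Cnt s).
Local Notation optimal := (optimal s).

Lemma mulW k : k * W = k * s + 2 * k.
Proof. by rewrite -addn2 mulnDr [k * 2]mulnC. Qed.

Lemma in_beta_char i j k r : 1 <= i -> i < W -> r < W ->
  in_beta s i j (k * W + r) = ((i < r) && (r + (2 * k).+1 <= s)) || ((r == i) && (k < j)).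
Proof.
move=> i1 iW hr; rewrite /in_beta addn2; congr (_ || _).
  apply/hasP/idP.
    move=> [k' hk' /andP [/andP [h1 h2] h3]].
    have e1 : (k' + 1) * s = k' * s + s by rewrite mulnDl mul1n.
    rewrite e1 in h2.
    have hr' : k * W + r - k' * W < W by move: h1 h2; rewrite !mulW; lia.
    have E : k * W + r = k' * W + (k * W + r - k' * W) by move: h1; lia.
    have [Ek Er] := lvl_inj hr hr' E; subst k'.
    move: h1 h2; rewrite mulW; lia.
  move=> /andP [h1 h2]; exists k.
    rewrite mem_iota add0n ltnS; apply: leq_trans (leq_addr _ _); by rewrite leq_pmulr.
  have e1 : (k + 1) * s = k * s + s by rewrite mulnDl mul1n.
  rewrite e1 mulW; apply/andP; split; [apply/andP; split|]; lia.
apply/hasP/andP.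
  move=> [p hp /eqP E]; rewrite mem_iota add0n in hp.
  have E' : k * W + r = p * W + i by rewrite E addnC.
  by have [-> ->] := lvl_inj hr iW E'; rewrite eqxx; move/andP: hp => [].
move=> [/eqP -> hk]; exists k; first by rewrite mem_iota add0n.
by rewrite addnC.
Qed.

Lemma sum_del1 (B : pred nat) x M (f : nat -> nat) : x < M -> B x ->
  \sum_(0 <= v < M) B v * f v = \sum_(0 <= v < M) (B v && (v != x)) * f v + f x.
Proof.
move=> hx hB.
have h := sum_add1 (a := fun v => B v && (v != x)) f hx; rewrite /= eqxx andbF in h.
rewrite -(h isT); apply: eq_bigr => v _.
by case: eqVneq => [->|]; rewrite ?hB ?andbT ?orbF.
Qed.

Lemma cnt_del1 (B : pred nat) x M : x < M -> B x ->
  \sum_(0 <= v < M) (B v : nat) = \sum_(0 <= v < M) ((B v && (v != x)) : nat) + 1.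
Proof.
move=> hx hB; have := sum_del1 (fun _ => 1) hx hB.
under eq_bigr do rewrite muln1. under [X in _ = X + _]eq_bigr do rewrite muln1. by [].
Qed.

Lemma exch B x y : optimal B -> x < y -> y < W * W -> B x -> ~~ B y ->
  ideal s (fun v => (B v && (v != x)) || (v == y)) -> False.
Proof.
move=> [HB Hopt] xy yN hx hy Hid.
have xN : x < W * W := bounded s3 HB hx.
have := Hopt _ Hid.
set B1 := fun v => B v && (v != x).
have n1 : ~~ B1 y by rewrite /B1 negb_and hy.
have S1 : Sum B = Sum B1 + x by rewrite /Sum (sum_del1 id xN hx).
have C1 : Cnt B = Cnt B1 + 1 by rewrite /Cnt (cnt_del1 xN hx).
have S2 : Sum (fun v => B1 v || (v == y)) = Sum B1 + y by rewrite /Sum (sum_add1 id yN n1).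
have C2 : Cnt (fun v => B1 v || (v == y)) = Cnt B1 + 1 by rewrite /Cnt (cnt_add1 yN n1).
rewrite /B1 in S2 C2; rewrite S2 C2 S1 C1 /B1; lia.
Qed.

Lemma addtop B y : optimal B -> y < W * W -> ~~ B y ->
  ideal s (fun v => B v || (v == y)) -> y <= Cnt B.
Proof.
move=> [HB Hopt] yN hy Hid.
have := Hopt _ Hid.
have S2 : Sum (fun v => B v || (v == y)) = Sum B + y by rewrite /Sum (sum_add1 id yN hy).
have C2 : Cnt (fun v => B v || (v == y)) = Cnt B + 1 by rewrite /Cnt (cnt_add1 yN hy).
rewrite S2 C2 addn1 binS bin1; lia.
Qed.

Lemma closedT B t : ideal s B -> t <= W -> W <= t + 2 -> closed t B.
Proof.
move=> [_ [Cs [Cs1 Cs2]]] h1 h2.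
have : (t == s) || (t == s.+1) || (t == s.+2) by lia.
by case/orP => [/orP [] |] /eqP ->.
Qed.

Lemma idealT (B : pred nat) : (forall h, B h -> 0 < h) ->
  (forall t, t <= W -> W <= t + 2 -> closed t B) -> ideal s B.
Proof. move=> H1 H2; split => //; split; first by apply: H2; lia. by split; apply: H2; lia. Qed.

End Comb4.

Section Comb5.
Variable s : nat.
Hypothesis s3 : 3 <= s.
Local Notation W := s.+2.
Local Notation wd := (wd s).
Local Notation nl := (nl s).
Local Notation Sum := (Sum s).
Local Notation Cnt := (Cnt s).
Local Notation optimal := (optimal s).

Variable B : pred nat.
Hypothesis Hopt : optimal B.

Let HB : ideal s B := proj1 Hopt.
Let n := nl B.
Let a k := wd k + 1 - n k.

Lemma JB k r : r < W -> B (k * W + r) = (r <= wd k) && (wd k < r + n k).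
Proof. exact: justify. Qed.

Lemma hn k : n k <= wd k.
Proof. by have [] := nl_bound s3 k HB. Qed.

Lemma chain k k' : k <= k' -> 0 < n k' -> 0 < n k /\ a k <= a k'.
Proof.
move=> hkk'; rewrite -(subnKC hkk'); elim: (k' - k) => [|d IH] hpos.
  by rewrite addn0 in hpos *.
rewrite addnS in hpos.
have d2 := drop2 s3 HB hpos; rewrite -/n in d2.
have h1 := hn (k + d).+1; have h2 := hn (k + d).
have [IH1 IH2] := IH (ltac:(lia)).
split => //; rewrite addnS; move: IH2; rewrite /a /wd in h1 h2 *; lia.
Qed.

Lemma Cnt_le L : L <= s -> (forall k, L <= k -> n k = 0) -> Cnt B <= L * (s - 1).
Proof.
move=> hL H0; rewrite Cnt_lvl (@big_cat_nat _ _ _ L) //=; last by lia.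
rewrite [X in _ + X]big1_seq ?addn0; last first.
  by move=> k /andP [_]; rewrite mem_index_iota => /andP [h _]; apply: H0.
have : \sum_(0 <= k < L) nl B k <= \sum_(0 <= k < L) (s - 1).
  apply: leq_sum => k _; have := hn k; rewrite /wd -/n; lia.
by rewrite sum_nat_const_nat subn0.
Qed.

Lemma shape : exists i j, [/\ 1 <= i <= s - 1, j <= (s - i + 1)./2 &
  forall v, B v = in_beta s i j v].
Proof.
have CB : forall t, t <= W -> W <= t + 2 -> closed t B by move=> t; apply: (closedT s3).
have exL : exists k, n k == 0 by exists s; have := hn s; rewrite /wd; lia.
case: (ex_minnP exL) => L /eqP nL Lmin.
have Lpos : forall k, k < L -> 0 < n k.
  move=> k hk; rewrite lt0n; apply/negP => /Lmin; lia.
have Lz : forall k, L <= k -> n k = 0.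
  move=> k hk; apply/eqP; rewrite -leqn0 leqNgt; apply/negP => hp.
  by have [h _] := chain hk hp; rewrite nL in h.
have Ls : L <= s by have := Lmin s; apply; have := hn s; rewrite /wd; lia.
have hA : (wd L == 0) || ((0 < L) && (wd L < a L.-1)).
  apply/idPn => hneg.
  have w1 : 0 < wd L by lia.
  have hcond : (L == 0) || (a L.-1 <= wd L) by lia.
  set y := L * W + wd L.
  have yW : wd L < W by rewrite /wd; lia.
  have ny : ~~ B y by rewrite /y JB // nL; lia.
  have yN : y < W * W.
    have : L.+1 * W <= W * W by rewrite leq_mul2r; apply/orP; right; lia.
    rewrite /y mulSn; lia.
  have Hid : ideal s (fun v => B v || (v == y)).
    apply: (idealT s3).
      move=> h /orP [hb|/eqP ->]; first by have [H _] := HB; apply: H.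
      rewrite /y; lia.
    move=> t t1 t2 h /orP [hb|/eqP ->] th.
      have [h1 h2] := CB t t1 t2 h hb th; by rewrite h2.
    have [Lz0|Lp] := posnP L.
      exfalso; move: th w1; rewrite /y Lz0 mul0n add0n /wd; lia.
    have hcond' : a L.-1 <= wd L by move: hcond; lia.
    have LW : L * W = L.-1 * W + W by rewrite -{1}(prednK Lp) mulSn addnC.
    have e : y - t = L.-1 * W + (wd L + (W - t)) by rewrite /y LW; lia.
    split; first by rewrite /y LW; nia.
    rewrite e; apply/orP; left.
    have hnL := hn L.-1; have hp := Lpos L.-1 (ltac:(lia)).
    rewrite JB; last by move: w1; rewrite /wd; lia.
    move: hcond'; rewrite /a /wd in w1 hnL *; lia.
  have := addtop s3 Hopt yN ny Hid.
  have := Cnt_le Ls Lz.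
  rewrite /y mulW.
  have : L * (s - 1) = L * s - L by rewrite mulnBr muln1.
  move: w1; rewrite /wd; nia.
have L0 : 0 < L by move: hA; rewrite /wd; lia.
set a0 := a 0.
have n0 := Lpos 0 L0.
have hE : forall k, 0 < n k -> a k <= a0 + 1.
  move=> k hk; rewrite leqNgt; apply/negP => hbad.
  have exq : exists k, (0 < n k) && (a0 + 2 <= a k) by exists k; rewrite hk; lia.
  case: (ex_minnP exq) => q /andP [nq aq] qmin.
  have q0 : 0 < q by case: q nq aq qmin => //; rewrite /a0; lia.
  have below : forall k, k < q -> [/\ 0 < n k, a k <= a0 + 1 & a0 <= a k].
    move=> k' hk'; have [c1 c2] := chain (ltnW hk') nq.
    have [_ c3] := chain (leq0n k') c1.
    split => //; rewrite leqNgt; apply/negP => hb.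
    by have := qmin k'; rewrite c1 /= => /(_ (ltac:(lia))); lia.
  have exp : exists k, (k < q) && (a k == a0) by exists 0; rewrite q0 eqxx.
  have ubp : forall k, (k < q) && (a k == a0) -> k <= q by move=> k' /andP [h _]; lia.
  case: (ex_maxnP exp ubp) => p /andP [pq /eqP ap] pmax.
  have mid : forall k, p < k -> k < q -> a k = a0 + 1.
    move=> k' h1 h2; have [_ b2 b3] := below k' h2.
    case: (eqVneq (a k') a0) => E; last by lia.
    by have := pmax k'; rewrite h2 E eqxx /= => /(_ isT); lia.
  have [np _ _] := below p pq.
  have hnq := hn q; have hnp := hn p.
  have aW : a0 < W by rewrite /a0 /a /wd; lia.
  set x := p * W + a0.
  set y := q * W + (a q - 1).
  have yr : a q - 1 < W by rewrite /a /wd; lia.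
  have Bx : B x by rewrite /x JB // -ap /a; lia.
  have ny : ~~ B y by rewrite /y JB //; rewrite /a; lia.
  have xy : x < y.
    have : p.+1 * W <= q * W by rewrite leq_mul2r; apply/orP; right.
    rewrite /x /y mulSn; lia.
  have yN : y < W * W.
    have : q.+1 * W <= W * W by rewrite leq_mul2r; apply/orP; right; rewrite /wd in hnq; lia.
    rewrite /y mulSn; rewrite /a /wd in yr *; lia.
  apply: (exch s3 Hopt xy yN Bx ny).
  apply: (idealT s3).
    move=> h /orP [/andP [hb _]|/eqP ->]; first by have [H _] := HB; apply: H.
    rewrite /y; rewrite /a in aq *; lia.
  move=> t t1 t2 h /orP [/andP [hb hx]|/eqP ->] th.
    have [h1 h2] := CB t t1 t2 h hb th; split => //; apply/orP; left; rewrite h2 andTb.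
    apply/negP => /eqP Ex.
    have [Eh hr] := decomp s h.
    move: (h %/ W) (h %% W) Eh hr => k1 r1 Eh hr; subst h.
    move: hb; rewrite JB //.
    case: (leqP (W - t) a0) => hd.
      have E2 : k1 * W + r1 = p.+1 * W + (a0 - (W - t)) by move: Ex; rewrite /x mulSn; nia.
      have hr2 : a0 - (W - t) < W by lia.
      have [Ek Er] := lvl_inj hr hr2 E2; subst k1 r1.
      have hn1 := hn p.+1.
      case: (posnP (n p.+1)) => hz; first by rewrite -/n hz; lia.
      have : a0 + 1 <= a p.+1.
        case: (ltngtP p.+1 q) => hpq; [by rewrite mid //; lia| lia |].
        by rewrite hpq; lia.
      rewrite /a -/n; lia.
    have E2 : k1 * W + r1 = p * W + (a0 + t) by move: Ex; rewrite /x; nia.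
    have hr2 : a0 + t < W by lia.
    have [Ek Er] := lvl_inj hr hr2 E2; subst k1 r1.
    rewrite /wd; lia.
  have qW : q * W = q.-1 * W + W by rewrite -{1}(prednK q0) mulSn addnC.
  have [b1 b2 b3] := below q.-1 (ltac:(lia)).
  have hnq1 := hn q.-1.
  have hw : wd q.-1 = wd q + 2 by rewrite /wd; rewrite /a /wd in aq hnq; lia.
  have e : y - t = q.-1 * W + (a q - 1 + (W - t)) by rewrite /y qW; lia.
  split; first by rewrite /y qW; nia.
  rewrite e; apply/orP; left; apply/andP; split.
    rewrite JB; last by rewrite /a /wd in yr aq hnq *; lia.
    rewrite /a /wd in b2 aq hw hnq hnq1 *; lia.
  apply/negP => /eqP E3.
  have hr3 : a q - 1 + (W - t) < W by rewrite /a /wd in aq hnq *; lia.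
  have [Ek Er] := lvl_inj hr3 aW E3.
  lia.
have exj : exists k, (k < L) && (a k == a0) by exists 0; rewrite L0 eqxx.
have ubj : forall k, (k < L) && (a k == a0) -> k <= L by move=> k /andP [h _]; lia.
case: (ex_maxnP exj ubj) => p0 /andP [p0L /eqP ap0] p0max.
have aeq : forall k, k < L -> (a k == a0) = (k <= p0).
  move=> k hk; case: (leqP k p0) => hkp.
    have [_ c1] := chain hkp (Lpos _ p0L); have [_ c2] := chain (leq0n k) (Lpos _ hk).
    apply/eqP; rewrite /a0 in ap0 c2 *; lia.
  apply/negP => /eqP E; have := p0max k; rewrite hk E eqxx /= => /(_ isT); lia.
exists a0, p0.+1; split.
- have := hn 0; rewrite /a0 /a /wd; lia.
- have := hn p0; move: ap0; rewrite /a0 /a /wd; have := Lpos _ p0L; lia.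
move=> v; have [Ev hr] := decomp s v.
move: (v %/ W) (v %% W) Ev hr => k r Ev hr; subst v.
have i1 : 1 <= a0 by have := hn 0; rewrite /a0 /a; lia.
have iW : a0 < W by have := hn 0; rewrite /a0 /a /wd; lia.
rewrite JB // in_beta_char //.
case: (ltnP k L) => hk.
  have hk0 := Lpos _ hk; have := hE k hk0; have [_ c2] := chain (leq0n k) hk0.
  move: c2; have := aeq k hk; have := hn k; rewrite /a0 /a /wd; lia.
rewrite Lz //.
have hL1 : wd L = 0 \/ wd L < a0 + 1.
  case/orP: hA => [/eqP -> |/andP [_ h]]; [by left | right].
  have := hE L.-1 (Lpos L.-1 (ltac:(lia))); lia.
move: hL1; rewrite /wd; lia.
Qed.

End Comb5.

Lemma dec_tr : transitive dec.
Proof. move=> a b c h1 h2; rewrite /dec in h1 h2 *; lia. Qed.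
Lemma dec_irr : irreflexive dec.
Proof. by move=> a; rewrite /dec ltnn. Qed.

Lemma beta_sorted la : is_partition la -> sorted dec (beta la).
Proof.
move=> Hp; have [Hd Hpos] := part_nth Hp.
apply/(sortedP 0) => p; rewrite size_beta => hp.
rewrite /dec !nth_beta //; last by lia.
have := Hd p p.+1 (leqnSn p) hp; lia.
Qed.

Lemma beta_pos la : is_partition la -> forall v, v \in beta la -> 0 < v.
Proof.
move=> Hp v; have [Hd Hpos] := part_nth Hp.
rewrite mem_beta => /hasP [p]; rewrite mem_iota add0n => /andP [_ hp] /eqP ->.
rewrite nth_beta //; have := Hpos p hp; lia.
Qed.

Unset Implicit Arguments.
Theorem lemma3p2 (s : nat) (la : seq nat) :
  3 <= s ->
  is_partition la -> is_sss_core s la ->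
  (forall mu : seq nat, is_partition mu -> is_sss_core s mu -> psize mu <= psize la) ->
  exists i j : nat,
    [/\ 1 <= i <= s - 1, j <= (s - i + 1)./2 & la = lambda_ij s i j].
Proof.
move=> s3 Hpart /and3P [c1 c2 c3] Hmax.
set B : pred nat := fun v => v \in beta la.
have HB : ideal s B.
  split; first by move=> h; apply: beta_pos.
  split; first exact: core_closed.
  split; exact: core_closed.
have Bbd := bounded s3 HB.
have Eb : beta la = lst s B.
  apply: (irr_sorted_eq dec_tr dec_irr (beta_sorted Hpart) (lst_sorted s B)) => v.
  rewrite mem_lst /B /=; case: (boolP (v \in beta la)) => h; last by rewrite andbF.
  by rewrite andbT (Bbd v h).
have SB : Sum s B = psize la + 'C(Cnt s B, 2).
  by rewrite -sumn_lst -Eb -psize_beta -size_lst -Eb size_beta.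
have Hopt : optimal s B.
  split => // B' HB'.
  set l := lst s B'.
  have lpos : all (fun x => 0 < x) l.
    apply/allP => v; rewrite mem_lst => /andP [_ hv]; have [H _] := HB'; exact: H.
  have [Pmu Bmu] := pob_part (lst_sorted s B') lpos.
  set mu := partition_of_beta l in Pmu Bmu.
  have clo : forall t, closed t B' -> closed t (mem (beta mu)).
    move=> t Ct h; rewrite Bmu /= mem_lst => /andP [hN hh] th.
    have [h1 h2] := Ct h hh th; split => //; rewrite mem_lst h2 andbT; lia.
  have [_ [C1 [C2 C3]]] := HB'.
  have Cmu : is_sss_core s mu.
    apply/and3P; split.
    - by apply: closed_core => //; [lia | exact: clo].
    - by apply: closed_core => //; exact: clo.
    - by apply: closed_core => //; exact: clo.
  have := Hmax mu Pmu Cmu.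
  have SB' : Sum s B' = psize mu + 'C(Cnt s B', 2).
    by rewrite -sumn_lst -Bmu -psize_beta -size_lst -Bmu size_beta.
  rewrite SB SB'; lia.
have [i [j [hi hj Hv]]] := shape s3 Hopt.
exists i, j; split => //.
rewrite /lambda_ij -(pob_beta la); congr partition_of_beta.
apply: (irr_sorted_eq dec_tr dec_irr (beta_sorted Hpart)).
  rewrite /beta_list rev_sorted.
  have -> : (fun z : nat => dec^~ z) = ltn by [].
  apply: sorted_filter; first exact: ltn_trans.
  exact: iota_ltn_sorted.
move=> v; rewrite /beta_list mem_rev mem_filter mem_iota.
have := Hv v; rewrite /B /= => <-.
case: (boolP (v \in beta la)) => h //=.
have := Bbd v h; have := beta_pos Hpart h; rewrite addn2 -mulnn; lia.
Qed.
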